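(* Let $n\ge 3$ and let $c=(c_1,\ldots,c_n)\in\{0,1,2\}^n$ be a stable configuration on the wheel graph $W_n$. Then $c$ is SSM-recurrent (resp. ASM-recurrent) if and only if there exists an orientation (resp. an acyclic orientation) $\mathcal O$ of the cycle graph $C_n$ such that $c_i\ge \mathrm{in}_{\mathcal O}(i)$ for all $i\in[n]$, where $\mathrm{in}_{\mathcal O}(i)$ is the in-degree of $i$ in $\mathcal O$.
   Context: The cycle graph $C_n$ has vertex set $[n]=\{1,\ldots,n\}$ and edges $\{i,i+1\}$ ($1\le i\le n-1$) and $\{n,1\}$. The wheel graph $W_n$ is obtained from $C_n$ by adding a vertex $0$ (the sink) adjacent to every vertex of $[n]$. Sandpile setting: a configuration on a graph with vertex set $\{0,\ldots,n\}$ and sink $0$ is $c\in\mathbb{Z}_{\ge0}^n$; vertex $i$ is stable if $c_i<\deg(i)$, $c$ stable if all $i\in[n]$ are (on $W_n$ the stable configurations are exactly $\{0,1,2\}^n$). ASM: an unstable vertex loses $\deg(i)$ grains and sends one to each neighbour (grains to the sink vanish); stabilisation is order independent; the ASM Markov chain on stable configurations adds a grain at a vertex chosen by a fully supported distribution on $[n]$ and stabilises. SSM with parameter $p\in(0,1)$: a toppling vertex sends, independently for each neighbour, one grain to that neighbour with probability $p$ (else keeps it); Markov chain defined likewise. ASM-/SSM-recurrent = recurrent state of the respective chain. Known characterisation: a stable $c$ is ASM-recurrent iff there is an acyclic orientation $\mathcal O$ of the whole graph in which $0$ is the unique vertex with all incident edges incoming ($0$-rooted) and $c_i\ge\mathrm{in}_{\mathcal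 O}(i)$ for all $i\in[n]$; SSM-recurrent iff there is such a $0$-rooted orientation, not necessarily acyclic. *)

(* Defs.v *)
From mathcomp Require Import all_boot.
From Stdlib Require Import Relations.
Set Implicit Arguments. Unset Strict Implicit. Unset Printing Implicit Defensive.

(* Vertices [n] = {1,..,n} are represented by 'I_n (vertex k+1 <-> ordinal k);
   the sink 0 of W_n is not represented in configurations.
   In C_n, the neighbours of i are ordS i (i+1 mod n) and ord_pred i (i-1 mod n).
   In W_n every non-sink vertex has degree 3 (its two cycle neighbours and the sink). *)

Definition config (n : nat) := {ffun 'I_n -> nat}.

Definition wheel_deg : nat := 3.

Definition stable n (c : config n) : Prop := forall i, c i < wheel_deg.

Definition add_grain n (c : config n) (i : 'I_n) : config n :=
  [ffun j => c j + (j == i)].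

(* SSM toppling of vertex i on W_n: for each neighbour, independently, a grain
   is either sent (bit true) or kept (bit false).
   bl: to ord_pred i, br: to ordS i, bs: to the sink (grain vanishes). *)
Definition topple n (c : config n) (i : 'I_n) (bl br bs : bool) : config n :=
  [ffun j => (if j == i then c j - (bl + br + bs) else c j)
             + ((j == ord_pred i) && bl) + ((j == ordS i) && br)].

(* one SSM toppling step at an unstable vertex, with a positive-probability
   choice of sent grains (p in (0,1) makes every choice positive-probability) *)
Definition ssm_topple_step n (c d : config n) : Prop :=
  exists i : 'I_n, wheel_deg <= c i /\ exists bl br bs, d = topple c i bl br bs.

Definition asm_topple_step n (c d : config n) : Prop :=
  exists i : 'I_n, wheel_deg <= c i /\ d = topple c i true true true.

Definition stabilises_to n (step : relation (config n)) (c d : config n) : Prop :=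
  clos_refl_trans _ step c d /\ stable d.

(* transition of the Markov chain on stable configurations with positive
   probability: add a grain at some vertex (the distribution is fully
   supported) and stabilise *)
Definition chain_step n (step : relation (config n)) (c d : config n) : Prop :=
  stable c /\ exists i : 'I_n, stabilises_to step (add_grain c i) d.

(* recurrent state of a finite Markov chain: every state reachable from c
   can reach c back *)
Definition recurrent n (step : relation (config n)) (c : config n) : Prop :=
  stable c /\
  forall d, clos_refl_trans _ (chain_step step) c d ->
            clos_refl_trans _ (chain_step step) d c.

Definition SSM_recurrent n (c : config n) := recurrent (@ssm_topple_step n) c.
Definition ASM_recurrent n (c : config n) := recurrent (@asm_topple_step n) c.

Definition cycle_adj n (i j : 'I_n) : bool := (j == ordS i) || (i == ordS j).

Definition cycle_orientation n (arc : rel 'I_n) : Prop :=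
  (forall i j, arc i j -> cycle_adj i j) /\
  (forall i j, cycle_adj i j -> arc i j (+) arc j i).

Definition acyclic n (arc : rel 'I_n) : Prop :=
  ~ exists i j, arc i j && connect arc j i.

Definition indeg n (arc : rel 'I_n) (i : 'I_n) : nat := #|[pred j | arc j i]|.

(* Main.v *)
From Stdlib Require Import Relations.
Require Import Defs.
From mathcomp Require Import all_boot zify.
Set Implicit Arguments. Unset Strict Implicit. Unset Printing Implicit Defensive.


Lemma valS n (i : 'I_n) : val (ordS i) = if i.+1 < n then i.+1 else 0.
Proof.
rewrite /ordS /=; case: ltnP => h; first by rewrite modn_small.
have -> : i.+1 = n by have := ltn_ord i; lia.
by rewrite modnn.
Qed.

Lemma ordS_neq n (hn : 2 < n) (i : 'I_n) : (ordS i == i) = false.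
Proof. apply/negbTE; rewrite -val_eqE valS; have := ltn_ord i; case: ifP => /=; lia. Qed.

Lemma ordSS_neq n (hn : 2 < n) (i : 'I_n) : (ordS (ordS i) == i) = false.
Proof. apply/negbTE; rewrite -val_eqE !valS; have := ltn_ord i; do 2 case: ifP => /=; lia. Qed.

Lemma pred_succ_neq n (hn : 2 < n) (i : 'I_n) : (ord_pred i == ordS i) = false.
Proof.
apply/negbTE/negP => /eqP h.
have := ordSS_neq hn (ord_pred i); by rewrite ord_predK -h eqxx.
Qed.

Lemma pred_neq n (hn : 2 < n) (i : 'I_n) : (ord_pred i == i) = false.
Proof.
apply/negbTE/negP => /eqP h.
have := ordS_neq hn i; by rewrite -{1}h ord_predK eqxx.
Qed.

Lemma eq_predE n (k i : 'I_n) : (k == ord_pred i) = (ordS k == i).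
Proof. apply/eqP/eqP => [->|<-]; by rewrite ?ord_predK ?ordSK. Qed.

Lemma eq_succE n (k i : 'I_n) : (k == ordS i) = (ord_pred k == i).
Proof. apply/eqP/eqP => [->|<-]; by rewrite ?ord_predK ?ordSK. Qed.

Lemma iterS_val n (i : 'I_n) k : val (iter k (@ordS n) i) = (i + k) %% n.
Proof.
elim: k => [|k IH] /=; first by rewrite addn0 modn_small.
by rewrite /ordS /= IH -addn1 modnDml addn1 addnS.
Qed.

Lemma indegE n (hn : 2 < n) (arc : rel 'I_n) (hO : cycle_orientation arc) k :
  indeg arc k = arc (ord_pred k) k + arc (ordS k) k.
Proof.
rewrite /indeg -sum1_card big_mkcond /= (bigD1 (ord_pred k)) //= (bigD1 (ordS k)) /=;
  last by rewrite eq_sym pred_succ_neq.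
rewrite big1 ?addn0; first by rewrite !inE; case: (arc _ k); case: (arc _ k).
move=> j /andP [hj1 hj2]; rewrite inE; case h: (arc j k) => //.
have := hO.1 _ _ h; rewrite /cycle_adj [k == _]eq_sym -eq_predE.
by rewrite (negbTE hj1) (negbTE hj2).
Qed.

Lemma ordSS_neq' n (hn : 2 < n) (i : 'I_n) : (i == ordS (ordS i)) = false.
Proof. by rewrite eq_sym ordSS_neq. Qed.

Definition arc_of n (f : 'I_n -> bool) : rel 'I_n :=
  fun u w => ((w == ordS u) && f u) || ((u == ordS w) && ~~ f w).

Lemma arc_of_orient n (hn : 2 < n) f : cycle_orientation (@arc_of n f).
Proof.
split.
- by move=> u w; rewrite /arc_of /cycle_adj; case/orP => /andP [h _]; rewrite h ?orbT.
- move=> u w; rewrite /cycle_adj /arc_of; case/orP => /eqP ->;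
  rewrite ?ordSS_neq' ?eqxx //=; by case: (f _).
Qed.

Lemma arc_of_cw n (hn : 2 < n) f u : @arc_of n f u (ordS u) = f u.
Proof. by rewrite /arc_of eqxx ordSS_neq' /= ?orbF. Qed.

Lemma arc_of_ccw n (hn : 2 < n) f u : @arc_of n f (ordS u) u = ~~ f u.
Proof. by rewrite /arc_of eqxx ordSS_neq' /= ?orbF. Qed.

Lemma indeg_arc_of n (hn : 2 < n) f k :
  indeg (@arc_of n f) k = f (ord_pred k) + ~~ f k.
Proof.
rewrite (indegE hn (arc_of_orient hn f)) arc_of_ccw //.
by rewrite -{2}(ord_predK k) arc_of_cw.
Qed.

Lemma xor_neighbors n (hO : forall u w : 'I_n, cycle_adj u w -> true) : True.
Proof. by []. Qed.

Lemma cw_walk n (hn : 2 < n) (arc : rel 'I_n) (hO : cycle_orientation arc) :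
  forall p x, path arc x p ->
    (match p with [::] => True | y :: _ => y = ordS x end) ->
    (forall k, k < size p -> arc (iter k (@ordS n) x) (iter k.+1 (@ordS n) x)) /\
    last x p = iter (size p) (@ordS n) x.
Proof.
elim=> [|y q IH] x /=; first by [].
move=> /andP [hxy hq] ey; subst y.
have [IH1 IH2] : (forall k, k < size q ->
      arc (iter k (@ordS n) (ordS x)) (iter k.+1 (@ordS n) (ordS x))) /\
    last (ordS x) q = iter (size q) (@ordS n) (ordS x).
  apply: IH => //; case: q hq => [//|z q] /= /andP [hz _].
  have := hO.1 _ _ hz; rewrite /cycle_adj => /orP [/eqP //|/eqP e].
  have ezx : z = x by apply: ordS_inj.
  subst z; by have := hO.2 x (ordS x); rewrite /cycle_adj eqxx hxy hz => /(_ isT).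
split; last by rewrite IH2 /= -iterSr.
case=> [|k] hk; first exact: hxy.
rewrite iterSr; exact: (IH1 k hk).
Qed.

Lemma cyclic_cw n (hn : 2 < n) (arc : rel 'I_n) (hO : cycle_orientation arc) i :
  arc i (ordS i) -> connect arc (ordS i) i -> forall u, arc u (ordS u).
Proof.
move=> h1 /connectP [p hp hl].
have [H1 H2] := cw_walk hn hO (p := ordS i :: p) (x := i) (introT andP (conj h1 hp)) erefl.
have e2 : i = iter (size p).+1 (@ordS n) i := etrans hl H2.
set L := (size p).+1 in H1 e2.
have hL : n <= L.
  have : val (iter L (@ordS n) i) = val i by rewrite -e2.
  rewrite iterS_val => e.
  have : (i + L == i + 0 %[mod n]) by rewrite addn0 e modn_small.
  rewrite eqn_modDl mod0n => hd.
  by apply: dvdn_leq.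
move=> u.
have hk : (u + n - i) %% n < L by apply: leq_trans hL; apply: ltn_pmod; lia.
have e3 : iter ((u + n - i) %% n) (@ordS n) i = u.
  apply: val_inj; rewrite iterS_val /= modnDmr.
  have -> : i + (u + n - i) = u + n by have := ltn_ord i; lia.
  by rewrite modnDr modn_small.
by move: (H1 _ hk) => /=; rewrite e3.
Qed.

Lemma cyclic_dir n (hn : 2 < n) (arc : rel 'I_n) (hO : cycle_orientation arc) :
  ~ acyclic arc -> (forall u, arc u (ordS u)) \/ (forall u, arc (ordS u) u).
Proof.
move=> hna.
have [i [j /andP [hij hji]]] : exists i j, arc i j && connect arc j i.
  case: (boolP [exists i, [exists j, arc i j && connect arc j i]]).
    by move=> /existsP [i /existsP [j h]]; exists i, j.
  move=> hne; exfalso; apply: hna => [[i [j h]]]; move/negP: hne; apply.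
  by apply/existsP; exists i; apply/existsP; exists j.
have := hO.1 _ _ hij; rewrite /cycle_adj => /orP [] /eqP e.
- by left; subst j; apply: (cyclic_cw hn hO hij hji).
- right; subst i.
  have hOT : cycle_orientation [rel x y | arc y x].
    split=> u w /=.
    + by move=> /hO.1; rewrite /cycle_adj orbC.
    + by rewrite /cycle_adj orbC => /hO.2; rewrite addbC.
  have := @cyclic_cw n hn _ hOT j hij.
  rewrite connect_rev /= => H; exact: H.
Qed.

Ltac natff := repeat match goal with |- context [fun_of_fin ?f ?x] =>
  let y := fresh "y" in
  have [y ->] : exists y : nat, @eq nat (fun_of_fin f x) y by eexists end.

Ltac natfb := repeat match goal with |- context [nat_of_bool ?b] =>
  let y := fresh "b" in
  have [y ->] : exists y : nat, @eq nat (nat_of_bool b) y by eexists end.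

Definition crt n (R : relation (config n)) := clos_refl_trans (config n) R.
Definition csum n (c : config n) := \sum_k c k.
Definition cadd n (c z : config n) : config n := [ffun k => c k + z k].

Lemma toppleA_eq n (c : config n) i k : 3 <= c i ->
  topple c i true true true k + 3 * (k == i) = c k + (k == ord_pred i) + (k == ordS i).
Proof.
move=> h; rewrite ffunE !andbT; case: eqVneq => [->|_] /=.
- have -> : (true + true + true) = 3 by []. lia.
- lia.
Qed.

Lemma sum_eq1 n (j : 'I_n) : \sum_k ((k == j) : nat) = 1.
Proof. by rewrite (bigD1 j) //= eqxx big1 // => k /negbTE ->. Qed.

Lemma csum_toppleA n (c : config n) i : 3 <= c i -> csum (topple c i true true true) < csum c.
Proof.
move=> h.
have E : \sum_k (topple c i true true true k + 3 * (k == i)) =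
         \sum_k (c k + (k == ord_pred i) + (k == ordS i)).
  by apply: eq_bigr => k _; apply: toppleA_eq.
move: E; rewrite !big_split /= !sum_eq1 big1_eq /csum.
set a := \sum_k topple c i true true true k; set b := \sum_k c k; clearbody a b; lia.
Qed.

Lemma confl n (c : config n) i j : i != j -> 3 <= c i -> 3 <= c j ->
  3 <= topple c i true true true j /\
  topple (topple c i true true true) j true true true =
  topple (topple c j true true true) i true true true.
Proof.
move=> hij hi hj.
have hj' : 3 <= topple c i true true true j.
  have := toppleA_eq j hi; rewrite eq_sym (negbTE hij); lia.
have hi' : 3 <= topple c j true true true i.
  have := toppleA_eq i hj; rewrite (negbTE hij); lia.
split => //; apply/ffunP => k.
have := toppleA_eq k hj'; have := toppleA_eq k hi'.
have := toppleA_eq k hi; have := toppleA_eq k hj.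
set A := topple (topple c i true true true) j true true true k.
set B := topple (topple c j true true true) i true true true k.
set C := topple c i true true true k.
set D := topple c j true true true k.
clearbody A B C D. lia.
Qed.

Lemma topple_cadd n (c z : config n) i : 3 <= c i ->
  topple (cadd c z) i true true true = cadd (topple c i true true true) z.
Proof.
move=> h; have h' : 3 <= cadd c z i by rewrite ffunE; lia.
apply/ffunP => k; have := toppleA_eq k h'; have := toppleA_eq k h.
rewrite !ffunE; lia.
Qed.

Lemma stable_dec n (c : config n) : stable c \/ exists i, 3 <= c i.
Proof.
case: (boolP [exists i, 3 <= c i]) => [/existsP [i hi]|/existsPn h]; first by right; exists i.
by left => i; rewrite /wheel_deg ltnNge; apply: h.
Qed.

Lemma stabA n (c : config n) : exists d, crt (@asm_topple_step n) c d /\ stable d.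
Proof.
have [N hN] : exists N, csum c < N by exists (csum c).+1.
elim: N c hN => [//|N IH] c hN.
case: (stable_dec c) => [hs|[i hi]]; first by exists c; split => //; apply: rt_refl.
have [d [hd1 hd2]] := IH (topple c i true true true) (leq_trans (csum_toppleA hi) (hN : _ <= N)).
exists d; split => //; apply: rt_trans hd1; apply: rt_step; exists i; split => //.
Qed.

Lemma stable_nostep n (c d : config n) : stable c -> ~ asm_topple_step c d.
Proof. by move=> hs [i [hi _]]; have := hs i; rewrite ltnNge hi. Qed.

Lemma uniqA n (c d1 d2 : config n) : crt (@asm_topple_step n) c d1 -> stable d1 ->
  crt (@asm_topple_step n) c d2 -> stable d2 -> d1 = d2.
Proof.
have [N hN] : exists N, csum c < N by exists (csum c).+1.
elim: N c hN d1 d2 => [//|N IH] c hN d1 d2 h1 s1 h2 s2.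
apply clos_rt_rt1n in h1; apply clos_rt_rt1n in h2.
case: h1 hN s1 => [|y1 z1 st1 r1] hN s1.
  case: h2 s2 => [//|y2 z2 st2 r2] s2.
  by case: (stable_nostep s1 st2).
case: h2 s2 => [|y2 z2 st2 r2] s2; first by case: (stable_nostep s2 st1).
apply clos_rt1n_rt in r1; apply clos_rt1n_rt in r2.
move: st1 st2 r1 r2 => [i [hi ->]] [j [hj ->]] r1 r2.
case: (eqVneq i j) => [eij|nij].
  subst j; apply: (IH _ _ _ _ r1 s1 r2 s2).
  exact: leq_trans (csum_toppleA hi) hN.
have [hj' eq] := confl nij hi hj.
have hi' : 3 <= topple c j true true true i.
  have [h _] := confl (negbT (introF eqP (fun e => (negP nij) (introT eqP (esym e))))) hj hi; exact h.
have [d3 [hd3 s3]] := stabA (topple (topple c i true true true) j true true true).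
have e1 : z1 = d3.
  apply: (IH _ _ _ _ r1 s1 _ s3); first exact: leq_trans (csum_toppleA hi) hN.
  apply: rt_trans hd3; apply: rt_step; exists j; split => //.
have e2 : z2 = d3.
  apply: (IH _ _ _ _ r2 s2 _ s3); first exact: leq_trans (csum_toppleA hj) hN.
  apply: rt_trans hd3; rewrite eq; apply: rt_step; exists i; split => //.
by rewrite e1 e2.
Qed.

Lemma crt_cadd n (c d z : config n) : crt (@asm_topple_step n) c d ->
  crt (@asm_topple_step n) (cadd c z) (cadd d z).
Proof.
move=> h; induction h as [x y [i [hi e]]|x|x y w _ h1 _ h2].
- apply: rt_step; exists i; split; first by rewrite ffunE; apply: leq_trans hi _; lia.
  by rewrite e topple_cadd.
- exact: rt_refl.
- exact: rt_trans h1 h2.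
Qed.

Definition cone n : config n := [ffun _ => 1].

Lemma in_setU1_nat n (T : {set 'I_n}) v k : v \notin T ->
  ((k \in v |: T) : nat) = (k == v) + (k \in T).
Proof. by move=> hv; rewrite in_setU1; case: eqVneq => [->|] //=; rewrite (negbTE hv). Qed.

Lemma orb1 (a b : bool) : a || b -> 1 <= a + b.
Proof. by case: a; case: b. Qed.

Lemma burnA n (hn : 2 < n) (c : config n) (arc : rel 'I_n) :
  cycle_orientation arc -> acyclic arc -> (forall k, indeg arc k <= c k) ->
  crt (@asm_topple_step n) (cadd c (cone n)) c.
Proof.
move=> hO hA hI.
pose phi u := #|[pred w | connect arc w u]|.
have phi_lt : forall u w, arc u w -> phi u < phi w.
  move=> u w huw; apply: proper_card; apply/properP; split.
    apply/subsetP => t; rewrite !inE => htu; exact: connect_trans htu (connect1 huw).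
  exists w; first by rewrite inE connect0.
  rewrite inE; apply/negP => hwu; apply: hA; exists u, w; by rewrite huw hwu.
have main : forall m, m <= n -> exists (T : {set 'I_n}) (d : config n),
    #|T| = m /\ crt (@asm_topple_step n) (cadd c (cone n)) d /\
    forall k, d k + 3 * (k \in T) = c k + 1 + (ord_pred k \in T) + (ordS k \in T).
  elim=> [|m IH] hm.
    exists (set0 : {set 'I_n}). exists (cadd c (cone n)). split; first by rewrite cards0.
    split; first exact: rt_refl.
    by move=> k; rewrite !in_set0 !ffunE /= muln0 !addn0.
  have [T [d [hT [hd he]]]] := IH (ltnW hm).
  have [v0 hv0] : exists v0, v0 \in ~: T.
    have : 0 < #|~: T| by have := cardsC T; rewrite card_ord; lia.
    by case/card_gt0P => x hx; exists x.
  have hv0' : v0 \notin T by move: hv0; rewrite inE.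
  case: (@arg_maxnP _ v0 (fun x => x \notin T) phi hv0') => v hv hmax.
  have hout : forall w, arc v w -> w \in T.
    move=> w hvw; apply/negPn/negP => hw.
    have := hmax w hw; have := phi_lt _ _ hvw; rewrite /geq; lia.
  have hdv : 3 <= d v.
    have := he v; rewrite (negbTE hv) muln0 addn0 => ->.
    have x1 : arc (ord_pred v) v || (ord_pred v \in T).
      have := hO.2 (ord_pred v) v; rewrite /cycle_adj ord_predK eqxx => /(_ isT).
      case: (arc (ord_pred v) v) => //= h; exact: hout _ h.
    have x2 : arc (ordS v) v || (ordS v \in T).
      have := hO.2 v (ordS v); rewrite /cycle_adj eqxx => /(_ isT).
      case: (arc (ordS v) v); rewrite ?addbT ?addbF //= => h; exact: hout _ h.
    have := hI v; rewrite (indegE hn hO).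
    move: (orb1 x1) (orb1 x2); natff; lia.
  exists (v |: T), (topple d v true true true); split.
    by rewrite cardsU1 hv hT.
  split; first by eapply rt_trans; [exact: hd|]; apply: rt_step; exists v.
  move=> k; have := toppleA_eq k hdv; have := he k.
  rewrite !in_setU1_nat // eq_predE eq_succE.
  natff; natfb; lia.
have [T [d [hT [hd he]]]] := main n (leqnn n).
have hTT : forall k, k \in T.
  move=> k; have : T == [set: 'I_n]. by rewrite eqEcard subsetT cardsT card_ord hT leqnn.
  by move/eqP ->; rewrite inE.
have ecd : d = c by apply/ffunP => k; have := he k; rewrite !hTT; natff; lia.
by rewrite ecd in hd.
Qed.

Definition top n : config n := [ffun _ => 2].

Lemma accumA n (x : config n) : forall d, stable d -> exists d',
  crt (chain_step (@asm_topple_step n)) d d' /\ stable d' /\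
  crt (@asm_topple_step n) (cadd d x) d'.
Proof.
have [N hN] : exists N, csum x < N by exists (csum x).+1.
elim: N x hN => [//|N IH] x hN d hd.
case: (boolP [exists v, 0 < x v]) => [/existsP [v hv]|/existsPn h0].
  pose x' : config n := [ffun k => x k - (k == v)].
  have ex : forall k, x' k + (k == v) = x k.
    move=> k; rewrite ffunE; move: hv; case: eqVneq => [->|_] /=; natff; lia.
  have hx' : csum x' < N.
    have : \sum_k (x' k + (k == v)) = csum x by apply: eq_bigr => k _; apply: ex.
    rewrite big_split /= sum_eq1 /csum => E.
    move: hN; rewrite /csum -E; set a := \sum_k x' k; clearbody a; lia.
  have [d1 [hd1 s1]] := stabA (add_grain d v).
  have [d' [h1 [h2 h3]]] := IH x' hx' d1 s1.
  exists d'; split.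
    eapply rt_trans; [|exact: h1]; apply: rt_step; split => //; exists v; split => //.
  split => //.
  have -> : cadd d x = cadd (add_grain d v) x'.
    by apply/ffunP => k; rewrite !ffunE -ex; natff; natfb; lia.
  eapply rt_trans; [exact: crt_cadd hd1|exact: h3].
exists d; split; first exact: rt_refl.
split => //.
have -> : cadd d x = d.
  by apply/ffunP => k; rewrite !ffunE; have := h0 k; natff; lia.
exact: rt_refl.
Qed.

Lemma reachA n (hn : 2 < n) (c : config n) (arc : rel 'I_n) : stable c ->
  cycle_orientation arc -> acyclic arc -> (forall k, indeg arc k <= c k) ->
  crt (chain_step (@asm_topple_step n)) (top n) c.
Proof.
move=> hc hO hA hI.
have st : stable (top n) by move=> k; rewrite ffunE.
have [d' [h1 [h2 h3]]] := accumA c st.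
have hb := burnA hn hO hA hI.
have e : cadd (top n) c = cadd (cadd c (cone n)) (cone n).
  by apply/ffunP => k; rewrite !ffunE; natff; lia.
have h4 : crt (@asm_topple_step n) (cadd (top n) c) c.
  rewrite e; eapply rt_trans; [exact: crt_cadd hb|exact: hb].
by rewrite -(uniqA h3 h2 h4 hc).
Qed.

Lemma reach_up n step (c d : config n) : stable c -> stable d ->
  (forall k, c k <= d k) -> crt (chain_step step) c d.
Proof.
have [N hN] : exists N, \sum_k (d k - c k) < N by exists (\sum_k (d k - c k)).+1.
elim: N c hN => [//|N IH] c hN hc hd hcd.
case: (boolP [exists v, c v < d v]) => [/existsP [v hv]|/existsPn h0].
  have hc' : stable (add_grain c v).
    move=> k; rewrite ffunE; have := hd k; have := hcd k; have := hv; rewrite /wheel_deg.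
    case: eqVneq => [->|_] /=; natff; lia.
  apply: (@rt_trans _ _ _ (add_grain c v)).
    by apply: rt_step; split => //; exists v; split => //; apply: rt_refl.
  apply: IH => // [|k]; last by rewrite ffunE; have := hcd k; have := hv; case: eqVneq => [->|_] /=; natff; lia.
  have E : \sum_k (d k - add_grain c v k + (k == v)) = \sum_k (d k - c k).
    apply: eq_bigr => k _; rewrite ffunE; have := hcd k; have := hv.
    case: eqVneq => [->|_] /=; natff; lia.
  move: E hN; rewrite big_split /= sum_eq1.
  set a := \sum_k _; set b := \sum_k _; clearbody a b; lia.
have -> : d = c.
  apply/ffunP => k; have := h0 k; have := hcd k; rewrite -leqNgt; natff; lia.
exact: rt_refl.
Qed.

Definition fok n (f : 'I_n -> bool) (c : config n) :=
  forall k, f (ord_pred k) + ~~ f k <= c k.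

Definition fup n (f : 'I_n -> bool) (i : 'I_n) (bl br : bool) :=
  fun u => if (u == ord_pred i) && bl then false else if (u == i) && br then true else f u.

Lemma pred_neq' n (hn : 2 < n) (i : 'I_n) : (i == ord_pred i) = false.
Proof. by rewrite eq_sym pred_neq. Qed.
Lemma ordS_neq' n (hn : 2 < n) (i : 'I_n) : (i == ordS i) = false.
Proof. by rewrite eq_sym ordS_neq. Qed.
Lemma succ_pred_neq n (hn : 2 < n) (i : 'I_n) : (ordS i == ord_pred i) = false.
Proof. by rewrite eq_sym pred_succ_neq. Qed.

Lemma fok_topple n (hn : 2 < n) f (c : config n) i bl br bs :
  fok f c -> 3 <= c i -> fok (fup f i bl br) (topple c i bl br bs).
Proof.
move=> hf hi k; rewrite /fup ffunE (inj_eq (@ord_pred_inj n)) -eq_succE.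
have := hf k.
case: (eqVneq k i) => [->|ki].
  rewrite !pred_neq' ?ordS_neq' ?eqxx //=.
  move: hi; case: bl; case: br; case: bs; case: (f (ord_pred i)); case: (f i) => /=; natff; lia.
rewrite /=.
case: (eqVneq k (ord_pred i)) => [->|kp].
  rewrite pred_succ_neq ?eqxx //=.
  case: bl; case: (f (ord_pred (ord_pred i))); case: (f (ord_pred i)) => /=; natff; lia.
rewrite /=.
case: (eqVneq k (ordS i)) => [->|ks].
  rewrite ?eqxx //=.
  case: br; case: (f (ord_pred (ordS i))); case: (f (ordS i)) => /=; natff; lia.
rewrite /= ?andbF ?addn0; by [].
Qed.

Lemma fok_add n f (c : config n) i : fok f c -> fok f (add_grain c i).
Proof. move=> hf k; rewrite ffunE; apply: leq_trans (hf k) _; exact: leq_addr. Qed.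

Lemma chain_closed n step (P : config n -> Prop) :
  (forall c i, P c -> P (add_grain c i)) -> (forall c d, P c -> step c d -> P d) ->
  forall c d, P c -> crt (chain_step step) c d -> P d.
Proof.
move=> hadd hstep c d hc h; induction h as [x y [_ [i [hxy _]]]|x|x y z _ h1 _ h2].
- have := hadd _ i hc; clear hc; induction hxy as [a b hab|a|a b w _ g1 _ g2] => //.
  + by move=> ha; apply: hstep ha hab.
  + by move=> ha; apply: g2; apply: g1.
- exact: hc.
- by apply: h2; apply: h1.
Qed.

Lemma chain_stable n step (c d : config n) : stable c -> crt (chain_step step) c d -> stable d.
Proof.
move=> hc h; induction h as [x y [_ [i [_ hy]]]|x|x y z _ h1 _ h2] => //.
by apply: h2; apply: h1.
Qed.

Lemma crt_sub n (R S : relation (config n)) : (forall x y, R x y -> S x y) ->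
  forall c d, crt R c d -> crt S c d.
Proof.
move=> hRS c d h; induction h as [x y hxy|x|x y z _ h1 _ h2].
- by apply: rt_step; apply: hRS.
- exact: rt_refl.
- exact: rt_trans h1 h2.
Qed.

Lemma chain_asm_ssm n (c d : config n) :
  crt (chain_step (@asm_topple_step n)) c d -> crt (chain_step (@ssm_topple_step n)) c d.
Proof.
apply: crt_sub => x y [hx [i [hxy hy]]]; split => //; exists i; split => //.
move: hxy; apply: crt_sub => a b [j [hj e]]; exists j; split => //; by exists true, true, true.
Qed.

Lemma reach_top n step (c : config n) : stable c -> crt (chain_step step) c (top n).
Proof.
move=> hc; apply: reach_up => // k; rewrite ffunE //.
by have := hc k; rewrite /wheel_deg; natff; lia.
Qed.

Lemma valP n (i : 'I_n) : val (ord_pred i) = if val i == 0 then n.-1 else (val i).-1.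
Proof.
rewrite /ord_pred /=; have hi := ltn_ord i; case: eqP => [->|h].
  by rewrite add0n modn_small //; lia.
have -> : (i + n).-1 = (i.-1) + n by lia.
by rewrite modnDr modn_small //; lia.
Qed.

Definition xw n j : config n := [ffun u : 'I_n => if val u == 0 then 0 else if val u < j then 1
  else if val u == n.-1 then (if j == n.-1 then 4 else 3) else if val u == j then 3 else 2].

Definition cone' n : config n := [ffun _ => 1].

Lemma wave n (hn : 2 < n) : forall j, 1 <= j <= n.-1 ->
  crt (@ssm_topple_step n) (xw n 1) (xw n j).
Proof.
elim=> [//|j IH] /andP [h1 h2].
case: (eqVneq j 0) => [->|j0]; first exact: rt_refl.
have hj : j < n by lia.
eapply rt_trans; first (apply: IH; lia).
apply: rt_step; exists (Ordinal hj); split.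
  rewrite ffunE /=; have -> : (j == 0) = false by lia.
  rewrite ltnn; case: eqP => [?|_]; [lia|]; by rewrite eqxx.
exists false, true, true; apply/ffunP => u; rewrite !ffunE.
rewrite -!val_eqE valS /= andbF andbT addn0.
have -> : (j.+1 < n) = true by lia.
move: (val u) (ltn_ord u) => a hu.
case: (a =P j.+1) => ha /=; repeat case: ifP => ?; lia.
Qed.

Ltac crush := apply/ffunP; let w := fresh "w" in intro w;
  rewrite !ffunE -?val_eqE ?valS ?valP /= ?andbF ?andbT ?addn0;
  move: (val w) (ltn_ord w) => a hu;
  repeat case: ifP => ?;
  repeat match goal with |- context [nat_of_bool (?x == ?y)] => case: (x =P y) => ? end;
  rewrite /=; try lia.

Ltac pt := rewrite /wheel_deg !ffunE /= -?val_eqE /= ?eqxx ?andbT ?andbF; repeat case: ifP => ?; rewrite /=; try lia.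

Lemma top_one n (hn : 2 < n) : crt (chain_step (@ssm_topple_step n)) (top n) (cone n).
Proof.
have h0 : 0 < n by lia.
have hl : n.-1 < n by lia.
pose z := Ordinal h0; pose l := Ordinal hl.
pose d1 : config n := [ffun u : 'I_n => if val u == 0 then 0 else if val u == n.-1 then 2 else 1].
pose y : config n := [ffun u : 'I_n => if val u == 0 then 0 else if val u == n.-1 then 3 else 1].
have sd1 : stable d1 by move=> u; rewrite ffunE /wheel_deg; repeat case: ifP => ?.
apply: (@rt_trans _ _ _ d1); apply: rt_step.
- split; first by move=> u; rewrite ffunE.
  exists z; split => //.
  eapply rt_trans.
    apply: rt_step; exists z; split; first by rewrite !ffunE eqxx.
    exists true, true, true; reflexivity.
  have e1 : topple (add_grain (top n) z) z true true true = xw n 1.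
    crush.
  rewrite e1.
  eapply rt_trans; first (apply: (wave hn (j := n.-1)); lia).
  eapply rt_trans.
    apply: rt_step; exists l; split.
      pt.
    exists false, false, true; reflexivity.
  apply: rt_step; exists l; split.
    pt.
  exists false, false, true.
  crush.
- split => //; exists l; split; last by move=> u; rewrite ffunE.
  apply: rt_step; exists l; split.
    pt.
  exists false, true, true.
  crush.
Qed.

Lemma acyclic_dec n (arc : rel 'I_n) : acyclic arc \/ ~ acyclic arc.
Proof.
case: (boolP [exists i, [exists j, arc i j && connect arc j i]]).
  move=> /existsP [i /existsP [j h]]; right => ha; apply: ha; by exists i, j.
move=> hne; left => [[i [j h]]]; move/negP: hne; apply.
by apply/existsP; exists i; apply/existsP; exists j.
Qed.

Lemma fok_top n (f : 'I_n -> bool) : fok f (top n).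
Proof. by move=> k; rewrite ffunE; case: (f _); case: (f _). Qed.

Unset Implicit Arguments.

Theorem mainTheorem2 (n : nat) (hn : 3 <= n) (c : config n) (hc : stable c) :
  (SSM_recurrent c <->
     exists arc : rel 'I_n, cycle_orientation arc /\ forall i, indeg arc i <= c i) /\
  (ASM_recurrent c <->
     exists arc : rel 'I_n, cycle_orientation arc /\ acyclic arc /\
                            forall i, indeg arc i <= c i).
Proof.
have hn' : 2 < n by [].
have h0 : 0 < n by lia.
pose z := Ordinal h0.
split; split.
- move=> [_ hrec].
  have h2 := hrec _ (reach_top (@ssm_topple_step n) hc).
  have [f hf] : exists f, fok f c.
    apply: (@chain_closed n (@ssm_topple_step n) (fun c => exists f, fok f c) _ _ (top n)) => //.
    + by move=> x i [f hf]; exists f; apply: fok_add.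
    + move=> x y [f hf] [i [hi [bl [br [bs ->]]]]].
      by exists (fup f i bl br); apply: fok_topple.
    + by exists (fun _ => true); apply: fok_top.
  exists (arc_of f); split; first exact: arc_of_orient.
  by move=> i; rewrite indeg_arc_of.
- move=> [arc [hO hI]]; split => // d hcd.
  have hd := chain_stable hc hcd.
  apply: rt_trans (reach_top _ hd) _.
  case: (acyclic_dec arc) => [hA|hA].
    by apply: chain_asm_ssm; apply: (reachA hn' hc hO hA hI).
  have hc1 : forall k, 1 <= c k.
    move=> k; apply: leq_trans (hI k); rewrite (indegE hn' hO).
    case: (cyclic_dir hn' hO hA) => H.
      by have := H (ord_pred k); rewrite ord_predK => ->.
    by rewrite H; case: (arc _ _).
  apply: rt_trans (top_one hn') _.
  apply: reach_up => // k; first by rewrite ffunE.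
  by rewrite ffunE.
- move=> [_ hrec].
  have h2 := hrec _ (reach_top (@asm_topple_step n) hc).
  have [f [[u1 hu1] [[u2 hu2] hf]]] : exists f : 'I_n -> bool, (exists u, f u) /\ (exists u, ~~ f u) /\ fok f c.
    apply: (@chain_closed n (@asm_topple_step n)
      (fun c => exists f : 'I_n -> bool, (exists u, f u) /\ (exists u, ~~ f u) /\ fok f c) _ _ (top n)) => //.
    + by move=> x i [f [h1 [h2' hf]]]; exists f; split => //; split => //; apply: fok_add.
    + move=> x y [f [_ [_ hf]]] [i [hi ->]].
      exists (fup f i true true); split; last split.
      * by exists i; rewrite /fup pred_neq' // eqxx.
      * by exists (ord_pred i); rewrite /fup eqxx.
      * exact: fok_topple.
    + exists (fun u => u == z); split; first by exists z; rewrite eqxx.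
      split; first by exists (ordS z); rewrite ordS_neq.
      exact: fok_top.
  exists (arc_of f); split; first exact: arc_of_orient.
  split; last by move=> i; rewrite indeg_arc_of.
  move=> hex.
  case: (cyclic_dir hn' (arc_of_orient hn' f) (fun ha => ha hex)) => H.
    by move: (H u2); rewrite arc_of_cw // (negbTE hu2).
  by move: (H u1); rewrite arc_of_ccw // hu1.
- move=> [arc [hO [hA hI]]]; split => // d hcd.
  have hd := chain_stable hc hcd.
  apply: rt_trans (reach_top _ hd) _.
  exact: (reachA hn' hc hO hA hI).
Qed.
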